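(* Let $\phi:\mathbb{K}[x_{i|A}: i\in[n],A\subseteq[n]\setminus\{i\}]\to\mathbb{K}[y_i,\beta_j: i,j\in[n]]$, $x_{i|A}\mapsto y_i\prod_{j\in A}\beta_j$, and $I_\phi=\ker\phi=I_{\phi'}\cap\mathbb{K}[x_{i|A}:i\notin A]$. Let $T=T_1\cup T_2$ where $T_1$ consists of those elements of $G_L$ all of whose variables lie in $\mathbb{K}[x_{i|A}:i\notin A]$ (i.e. binomials $x_{i|A}x_{j|B}-x_{i|A\cap B}x_{j|A\cup B}$ in $G_L$ with $i\le j$, $i\notin A$, $j\notin A\cup B$), and $$T_2=\{x_{i|A}x_{j|B}-x_{i|(A\cap B)\cup\{j\}}\,x_{j|(A\setminus\{j\})\cup B}:\ i<j,\ i\notin A,\ j\notin B,\ j\in A,\ x_{i|A},x_{j|B}\text{ incomparable in }L\}.$$ Then $T$ generates $I_\phi$.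
   Context: $\phi'$ is the extension of $\phi$ to $\mathbb{K}[x_{i|A}: i\in[n],A\subseteq[n]]$ by the same formula, and $I_{\phi'}=\ker\phi'$. $L$ is the lattice on the variables $x_{i|A}$ with $x_{i|A}\le x_{j|B}$ iff $i\le j$ and $A\subseteq B$. $G_L=\{x_{i|A}x_{j|B}-x_{\min(i,j)|A\cap B}\,x_{\max(i,j)|A\cup B}: x_{i|A},x_{j|B}\text{ incomparable in }L\}$. *)

(* Defs.v *)
From HB Require Import structures.
From mathcomp Require Import all_boot all_order all_algebra.
From mathcomp Require Import mpoly.
Set Implicit Arguments. Unset Strict Implicit. Unset Printing Implicit Defensive.
Import Order.TTheory GRing.Theory.
Local Open Scope ring_scope.

(* Index set of the variables x_{i|A}, i in [n], A subset of [n] \ {i}.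
   [n] is modelled by 'I_n. *)
Definition Vx (n : nat) := {x : 'I_n * {set 'I_n} | x.1 \notin x.2}.

Definition NV (n : nat) := #|{: Vx n}|.

Definition Xring (K : fieldType) (n : nat) := {mpoly K[NV n]}.
(* Target ring K[y_1..y_n, beta_1..beta_n]: y_i = 'X_(lshift n i),
   beta_j = 'X_(rshift n j). *)
Definition Yring (K : fieldType) (n : nat) := {mpoly K[n + n]}.

(* The variable x_{i|A} (for i notin A); 0 is a dummy value when i \in A,
   which never occurs below. *)
Definition xvar (K : fieldType) (n : nat) (i : 'I_n) (A : {set 'I_n}) : Xring K n :=
  match @insub _ (fun x : 'I_n * {set 'I_n} => x.1 \notin x.2) (Vx n) (i, A) with
  | Some v => 'X_(enum_rank v)
  | None => 0
  end.

Definition phi_img (K : fieldType) (n : nat) (v : Vx n) : Yring K n :=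
  'X_(lshift n (val v).1) * \prod_(j in (val v).2) 'X_(rshift n j).

Definition phi (K : fieldType) (n : nat) (p : Xring K n) : Yring K n :=
  mmap (fun c : K => c%:MP) (fun k : 'I_(NV n) => phi_img K (enum_val k)) p.

Definition L_le (n : nat) (i : 'I_n) (A : {set 'I_n}) (j : 'I_n) (B : {set 'I_n}) : bool :=
  (i <= j)%N && (A \subset B).
Definition L_incomp (n : nat) (i : 'I_n) (A : {set 'I_n}) (j : 'I_n) (B : {set 'I_n}) : bool :=
  ~~ L_le i A j B && ~~ L_le j B i A.

(* T1: the elements of G_L all of whose variables x_{k|C} satisfy k notin C. *)
Definition T1_pred (n : nat) (i : 'I_n) (A : {set 'I_n}) (j : 'I_n) (B : {set 'I_n}) : bool :=
  [&& L_incomp i A j B, i \notin A, j \notin B,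
      (if (i <= j)%N then i else j) \notin A :&: B &
      (if (i <= j)%N then j else i) \notin A :|: B].

Definition T1_bin (K : fieldType) (n : nat) (i : 'I_n) (A : {set 'I_n}) (j : 'I_n) (B : {set 'I_n})
  : Xring K n :=
  xvar K i A * xvar K j B
  - (if (i <= j)%N then xvar K i (A :&: B) * xvar K j (A :|: B)
     else xvar K j (A :&: B) * xvar K i (A :|: B)).

Definition T2_pred (n : nat) (i : 'I_n) (A : {set 'I_n}) (j : 'I_n) (B : {set 'I_n}) : bool :=
  [&& (i < j)%N, i \notin A, j \notin B, j \in A & L_incomp i A j B].

Definition T2_bin (K : fieldType) (n : nat) (i : 'I_n) (A : {set 'I_n}) (j : 'I_n) (B : {set 'I_n})
  : Xring K n :=
  xvar K i A * xvar K j B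
  - xvar K i ((A :&: B) :|: [set j]) * xvar K j ((A :\ j) :|: B).

Definition quad (n : nat) := ('I_n * {set 'I_n} * 'I_n * {set 'I_n})%type.

Definition Tgens (K : fieldType) (n : nat) : seq (Xring K n) :=
  [seq T1_bin K q.1.1.1 q.1.1.2 q.1.2 q.2
     | q <- enum [pred q : quad n | T1_pred q.1.1.1 q.1.1.2 q.1.2 q.2]]
  ++ [seq T2_bin K q.1.1.1 q.1.1.2 q.1.2 q.2
     | q <- enum [pred q : quad n | T2_pred q.1.1.1 q.1.1.2 q.1.2 q.2]].

Definition in_ideal_gen (R : comRingType) (s : seq R) (p : R) : Prop :=
  exists c : 'I_(size s) -> R, p = \sum_(k < size s) c k * s`_k.

(* Main.v *)
Require Import Defs.
From HB Require Import structures.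
From mathcomp Require Import all_boot all_order all_algebra.
From mathcomp Require Import mpoly.
From mathcomp Require Import zify.
From Stdlib Require Import Classical IndefiniteDescription.
Set Implicit Arguments. Unset Strict Implicit. Unset Printing Implicit Defensive.
Import Order.TTheory GRing.Theory.
Local Open Scope ring_scope.

Section Ideal.
Variables (R : comRingType) (s : seq R).
Local Notation ig := (in_ideal_gen s).
Lemma ig0 : ig 0.
Proof. by exists (fun _ => 0); rewrite big1 // => k _; rewrite mul0r. Qed.
Lemma igD p q : ig p -> ig q -> ig (p + q).
Proof.
move=> [c1 ->] [c2 ->]; exists (fun k => c1 k + c2 k); rewrite -big_split /=.
by apply: eq_bigr => k _; rewrite mulrDl.
Qed.
Lemma igM r p : ig p -> ig (r * p).
Proof.
move=> [c ->]; exists (fun k => r * c k); rewrite mulr_sumr.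
by apply: eq_bigr => k _; rewrite mulrA.
Qed.
Lemma igN p : ig p -> ig (- p).
Proof. by move=> h; rewrite -mulN1r; apply: igM. Qed.
Lemma igB p q : ig p -> ig q -> ig (p - q).
Proof. by move=> hp hq; apply: igD => //; apply: igN. Qed.
Lemma igmem g : g \in s -> ig g.
Proof.
move=> gs; have hk : (index g s < size s)%N by rewrite index_mem.
pose k0 : 'I_(size s) := Ordinal hk.
exists (fun k => (k == k0)%:R); rewrite (bigD1 k0) //= eqxx mul1r big1 ?addr0.
  by rewrite nth_index.
by move=> k /negbTE ->; rewrite mul0r.
Qed.
Lemma igsum (I : Type) (r : seq I) (F : I -> R) :
  (forall i, ig (F i)) -> ig (\sum_(i <- r) F i).
Proof. by move=> h; apply: big_ind => //; [apply: ig0 | apply: igD]. Qed.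
End Ideal.

Lemma arT2' W i t a P q : (1 <= P)%N -> (2 * P + 2 < W)%N ->
  (W*(i*(a+(P+1))) + (a+(P+1))*(a+(P+1)) + W*((i+t+1)*(a+q)) + (a+q)*(a+q) <
   W*(i*(a+1)) + (a+1)*(a+1) + W*((i+t+1)*(P+a+q)) + (P+a+q)*(P+a+q))%N.
Proof. move=> h2 h3.
have h4 : (W * P <= W*((t+1)* P))%N by rewrite leq_mul2l leq_pmull ?orbT //; lia.
nia. Qed.
Lemma arT2 W i j a p q : (i < j)%N -> (2 <= p)%N -> (2 * p < W)%N ->
  (W*(i*(a+p)) + (a+p)*(a+p) + W*(j*(a+q)) + (a+q)*(a+q) <
   W*(i*(a+1)) + (a+1)*(a+1) + W*(j*(p-1+a+q)) + (p-1+a+q)*(p-1+a+q))%N.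
Proof. move=> h1 h2 h3.
have [t et] : exists t, j = (i+t+1)%N by exists (j-i-1)%N; lia.
have [P eP] : exists P, p = (P+1)%N by exists (p-1)%N; lia.
subst j p.
have -> : (P+1-1 = P)%N by lia.
apply: arT2'; lia.
Qed.
Lemma arT1 W i j a p q : (0 < W)%N -> (i < j)%N -> (1 <= p)%N ->
  (W*(i*(a+p)) + (a+p)*(a+p) + W*(j*(a+q)) + (a+q)*(a+q) <
   W*(i*a) + a*a + W*(j*(a+p+q)) + (a+p+q)*(a+p+q))%N.
Proof. move=> h0 h1 h2.
have [t et] : exists t, j = (i+t+1)%N by exists (j-i-1)%N; lia.
subst j.
have h4 : (0 < W * ((t+1)* p))%N by rewrite !muln_gt0 h0 h2 addn1.
nia. Qed.
Lemma arT0 W i a p q : (1 <= p)%N -> (1 <= q)%N ->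
  (W*(i*(a+p)) + (a+p)*(a+p) + W*(i*(a+q)) + (a+q)*(a+q) <
   W*(i*a) + a*a + W*(i*(a+p+q)) + (a+p+q)*(a+p+q))%N.
Proof. move=> h1 h2. nia. Qed.

Section Main.
Variables (K : fieldType) (n : nat).
Local Notation V := (Vx n).
Local Notation NVn := (NV n).
Local Notation X := (Xring K n).
Local Notation J := (in_ideal_gen (Tgens K n)).
Local Notation phi := (@phi K n).

Definition lab (v : V) : 'I_n := (val v).1.
Definition st (v : V) : {set 'I_n} := (val v).2.
Definition var (k : 'I_NVn) : V := enum_val k.
Definition rk (v : V) : 'I_NVn := enum_rank v.
Lemma varK : cancel rk var. Proof. exact: enum_rankK. Qed.
Lemma rkK : cancel var rk. Proof. exact: enum_valK. Qed.
Lemma lab_st (v : V) : lab v \notin st v. Proof. exact: (valP v). Qed.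
Definition mkV (i : 'I_n) (A : {set 'I_n}) (h : i \notin A) : V :=
  @exist _ (fun x : 'I_n * {set 'I_n} => x.1 \notin x.2) (i, A) h.

Lemma xvarE (i : 'I_n) (A : {set 'I_n}) (h : i \notin A) : xvar K i A = 'X_(rk (mkV h)).
Proof. rewrite /xvar (@insubT _ (fun x : 'I_n * {set 'I_n} => x.1 \notin x.2) V (i, A) h) /=. by []. Qed.

Lemma V_eq (u w : V) : lab u = lab w -> st u = st w -> u = w.
Proof.
move=> h1 h2; apply: val_inj; move: h1 h2; rewrite /lab /st.
by case: (val u) => a b; case: (val w) => c d /= -> ->.
Qed.

Definition Dv (v : V) : 'X_{1..n+n} :=
  (U_(lshift n (lab v)) + \sum_(j in st v) U_(rshift n j))%MM.

Lemma sum_eqc (A : {set 'I_n}) c : (\sum_(j in A) (j == c) = (c \in A))%N.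
Proof.
case: (boolP (c \in A)) => hc.
  rewrite (bigD1 c) //= eqxx big1 // => j /andP [_ /negbTE ->] //.
by rewrite big1 // => j hj; case: eqP hj hc => // -> ->.
Qed.

Lemma Dv_l v i : Dv v (lshift n i) = (lab v == i) :> nat.
Proof.
rewrite /Dv mnmDE mnm_sumE mnm1E eq_lshift big1 ?addn0 // => j _.
rewrite mnm1E; apply/eqP; rewrite eqb0 -val_eqE /=. have := ltn_ord i; lia.
Qed.

Lemma Dv_r v c : Dv v (rshift n c) = (c \in st v) :> nat.
Proof.
rewrite /Dv mnmDE mnm_sumE mnm1E.
have -> : (lshift n (lab v) == rshift n c) = false.
  by apply/negbTE; rewrite -val_eqE /=; have := ltn_ord (lab v); lia.
rewrite add0n -sum_eqc; apply: eq_bigr => j _; by rewrite mnm1E eq_rshift.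
Qed.

Lemma DvD (u w : V) x : (Dv u + Dv w)%MM x = (Dv u x + Dv w x)%N.
Proof. exact: mnmDE. Qed.

Lemma Dv_sum_eq (u w u' w' : V) :
  (forall x, (lab u == x) + (lab w == x) = (lab u' == x) + (lab w' == x))%N ->
  (forall c, (c \in st u) + (c \in st w) = (c \in st u') + (c \in st w'))%N ->
  (Dv u + Dv w = Dv u' + Dv w')%MM.
Proof.
move=> hl hs; apply/mnmP => x; rewrite !DvD -(splitK x).
case: (split x) => [i|c].
  by change (unsplit (inl i)) with (lshift n i); rewrite !Dv_l.
by change (unsplit (inr c)) with (rshift n c); rewrite !Dv_r.
Qed.


Lemma mnmDE' k (a b : 'X_{1..k}) x : (a + b)%MM x = (a x + b x)%N.
Proof. exact: mnmDE. Qed.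

Lemma phi_imgE v : phi_img K v = 'X_[Dv v].
Proof. by rewrite /phi_img /Dv mpolyXD mprodXE. Qed.

Definition L (g : 'I_NVn -> nat) (m : 'X_{1..NVn}) : nat := (\sum_k m k * g k)%N.

Lemma LD g m1 m2 : L g (m1 + m2)%MM = (L g m1 + L g m2)%N.
Proof. by rewrite /L -big_split; apply: eq_bigr => k _; rewrite mnmDE mulnDl. Qed.

Lemma LU g a : L g U_(a)%MM = g a.
Proof.
rewrite /L (bigD1 a) //= mnm1E eqxx mul1n big1 ?addn0 // => k hk.
by rewrite mnm1E eq_sym (negbTE hk).
Qed.

Lemma Lle g m C : (forall k, g k <= C)%N -> (L g m <= mdeg m * C)%N.
Proof.
move=> h; rewrite /L mdegE big_distrl /=; apply: leq_sum => k _.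
by rewrite leq_mul2l h orbT.
Qed.

Definition Dmn (m : 'X_{1..NVn}) : 'X_{1..n+n} :=
  (\sum_(k < NVn) Dv (var k) *+ m k)%MM.

Lemma DmnE m x : Dmn m x = L (fun k => Dv (var k) x) m.
Proof. by rewrite /Dmn mnm_sumE /L; apply: eq_bigr => k _; rewrite mulmnE mulnC. Qed.

Lemma Dmn_add m1 m2 : Dmn (m1 + m2)%MM = (Dmn m1 + Dmn m2)%MM.
Proof. by apply/mnmP => x; rewrite mnmDE' !DmnE LD. Qed.

Lemma Dmn_U a : Dmn U_(a)%MM = Dv (var a).
Proof. by apply/mnmP => x; rewrite DmnE LU. Qed.

Lemma phi_mmap1 m : mmap1 (fun k => phi_img K (enum_val k)) m = 'X_[Dmn m].
Proof.
rewrite /mmap1 (eq_bigr (fun k => 'X_[Dv (var k) *+ m k])) ?mprodXE //.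
by move=> k _; rewrite phi_imgE mpolyXn.
Qed.

Lemma phiX m : phi 'X_[m] = 'X_[Dmn m].
Proof. by rewrite /Defs.phi mmapX phi_mmap1. Qed.

Lemma phiD p q : phi (p + q) = phi p + phi q.
Proof. exact: mmapD. Qed.
Lemma phiB p q : phi (p - q) = phi p - phi q.
Proof. exact: mmapB. Qed.
Lemma phiM p q : phi (p * q) = phi p * phi q.
Proof. exact: (fst (mmap_is_multiplicative (fun k => phi_img K (enum_val k)) (mpolyC _ (R:=K))) p q). Qed.

Lemma phi_sum p : phi p = \sum_(m <- msupp p) (p@_m)%:MP * 'X_[Dmn m].
Proof. by rewrite /Defs.phi /mmap; apply: eq_bigr => m _; rewrite phi_mmap1. Qed.


Lemma T1_in i A j B : T1_pred i A j B -> T1_bin K i A j B \in Tgens K n.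
Proof.
move=> h; rewrite /Tgens mem_cat; apply/orP; left; apply/mapP.
by exists (i, A, j, B); rewrite // mem_enum.
Qed.
Lemma T2_in i A j B : T2_pred i A j B -> T2_bin K i A j B \in Tgens K n.
Proof.
move=> h; rewrite /Tgens mem_cat; apply/orP; right; apply/mapP.
by exists (i, A, j, B); rewrite // mem_enum.
Qed.

Definition f (v : V) : nat := ((2*n+1) * (lab v * #|st v|) + #|st v| * #|st v|)%N.

Lemma move (u w : V) (c : 'I_n) :
  (lab u <= lab w)%N -> (lab u = lab w -> #|st u| <= #|st w|)%N ->
  c \in st u -> c \notin st w -> c != lab w ->
  exists u' w' : V, [/\ J ('X_(rk u) * 'X_(rk w) - 'X_(rk u') * 'X_(rk w')),
     (f u + f w < f u' + f w')%N & (Dv u + Dv w = Dv u' + Dv w')%MM].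
Proof.
case: u => [[i A] hu]; case: w => [[j B] hw].
rewrite /lab /st /= => hij hcard hcA hcB hcj.
change (exist _ (i, A) hu) with (mkV hu); change (exist _ (j, B) hw) with (mkV hw).
have cardA : #|A| = (#|A :&: B| + #|A :\: B|)%N by rewrite cardsID.
have cardB : #|B| = (#|A :&: B| + #|B :\: A|)%N by rewrite setIC cardsID.
have hp : (0 < #|A :\: B|)%N by apply/card_gt0P; exists c; rewrite inE hcA hcB.
have hle : forall S : {set 'I_n}, (#|S| <= n)%N.
  by move=> S; have := max_card (mem S); rewrite card_ord.
have hAB : ~~ (A \subset B) by apply/subsetPn; exists c.
move: hij; rewrite leq_eqVlt => /orP [/eqP eij | lij].
  have eij' : i = j by apply: val_inj.
  subst j.
  have hBA : ~~ (B \subset A).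
    apply/negP => hs; have : A == B by rewrite eq_sym eqEcard hs hcard.
    by move/eqP => eAB; move: hcA hcB; rewrite eAB => ->.
  have hq : (0 < #|B :\: A|)%N by rewrite lt0n cards_eq0 setD_eq0.
  have hu' : i \notin A :&: B by rewrite inE (negbTE hu).
  have hw' : i \notin A :|: B by rewrite inE negb_or hu hw.
  exists (mkV hu'), (mkV hw'); split.
  - have -> : ('X_(rk (mkV hu)) * 'X_(rk (mkV hw)) - 'X_(rk (mkV hu')) * 'X_(rk (mkV hw')) : X)
        = T1_bin K i A i B by rewrite /T1_bin leqnn (xvarE hu) (xvarE hw) (xvarE hu') (xvarE hw').
    apply/igmem/T1_in.
    by rewrite /T1_pred /L_incomp /L_le leqnn /= hAB hBA hu hw hu' hw'.
  - rewrite /f /lab /st /=.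
    have := cardsUI A B => eU.
    have -> : #|A :|: B| = (#|A :&: B| + #|A :\: B| + #|B :\: A|)%N by lia.
    rewrite cardA cardB !addnA; apply: arT0; lia.
  - apply: Dv_sum_eq => x //=.
    by rewrite /st /= !inE; case: (x \in A); case: (x \in B).
case: (boolP (j \in A)) => hjA.
  have hu' : i \notin (A :&: B) :|: [set j].
    by rewrite !inE (negbTE hu) /= neq_ltn lij.
  have hw' : j \notin (A :\ j) :|: B by rewrite !inE eqxx /= (negbTE hw).
  exists (mkV hu'), (mkV hw'); split.
  - have -> : ('X_(rk (mkV hu)) * 'X_(rk (mkV hw)) - 'X_(rk (mkV hu')) * 'X_(rk (mkV hw')) : X)
        = T2_bin K i A j B by rewrite /T2_bin (xvarE hu) (xvarE hw) (xvarE hu') (xvarE hw').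
    apply/igmem/T2_in.
    by rewrite /T2_pred /L_incomp /L_le lij hu hw hjA (ltnW lij) (ltn_geF lij) /= hAB.
  - rewrite /f /lab /st /=.
    have eA' : #|(A :&: B) :|: [set j]| = (#|A :&: B| + 1)%N.
      by rewrite setUC cardsU1 inE hjA (negbTE hw) /= addnC.
    have e1 : (A :\ j) :&: B = A :&: B.
      apply/setP => x; rewrite !inE; case: eqP => // ->.
      by rewrite (negbTE hw) !andbF.
    have := cardsUI (A :\ j) B; rewrite e1 => eU.
    have eD : #|A| = (#|A :\ j|).+1 by rewrite (cardsD1 j A) hjA add1n.
    have hp2 : (2 <= #|A :\: B|)%N.
      rewrite (cardsD1 j (A :\: B)) inE hjA (negbTE hw) /=.
      have : (0 < #|(A :\: B) :\ j|)%N.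
        by apply/card_gt0P; exists c; rewrite !inE hcA hcB hcj.
      by rewrite add1n ltnS.
    have -> : #|(A :\ j) :|: B| = (#|A :\: B| - 1 + #|A :&: B| + #|B :\: A|)%N by lia.
    rewrite eA' cardA cardB !addnA; apply: arT2 => //.
    have := hle (A :\: B); lia.
  - apply: Dv_sum_eq => x //=.
    rewrite /st /= !inE; case: eqP => [->|_] /=.
      by rewrite hjA (negbTE hw).
    by case: (x \in A); case: (x \in B).
have hu' : i \notin A :&: B by rewrite inE (negbTE hu).
have hw' : j \notin A :|: B by rewrite inE negb_or hjA hw.
exists (mkV hu'), (mkV hw'); split.
- have -> : ('X_(rk (mkV hu)) * 'X_(rk (mkV hw)) - 'X_(rk (mkV hu')) * 'X_(rk (mkV hw')) : X)
      = T1_bin K i A j B by rewrite /T1_bin (ltnW lij) (xvarE hu) (xvarE hw) (xvarE hu') (xvarE hw').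
  apply/igmem/T1_in.
  by rewrite /T1_pred /L_incomp /L_le (ltnW lij) (ltn_geF lij) /= hAB hu hw hu' hw'.
- rewrite /f /lab /st /=.
  have := cardsUI A B => eU.
  have -> : #|A :|: B| = (#|A :&: B| + #|A :\: B| + #|B :\: A|)%N by lia.
  rewrite cardA cardB !addnA; apply: arT1 => //; lia.
- apply: Dv_sum_eq => x //=.
  by rewrite /st /= !inE; case: (x \in A); case: (x \in B).
Qed.


Implicit Types (m : 'X_{1..NVn}) (k a : 'I_NVn).

Definition viol (u w : V) := exists c : 'I_n,
  [/\ (lab u <= lab w)%N, (lab u = lab w -> #|st u| <= #|st w|)%N,
      c \in st u, c \notin st w & c != lab w].
Definition good (m : 'X_{1..NVn}) :=
  forall a b, (0 < m a)%N -> (0 < m b)%N -> ~ viol (var a) (var b).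
Definition Rel (m m' : 'X_{1..NVn}) := J ('X_[m] - 'X_[m']).
Definition P m := L (fun k => f (var k)) m.
Definition C := ((2*n+1)*(n*n) + n*n)%N.

Lemma f_le v : (f v <= C)%N.
Proof.
rewrite /f /C.
have h1 : (lab v < n)%N := ltn_ord _.
have h2 : (#|st v| <= n)%N by have := max_card (mem (st v)); rewrite card_ord.
by apply: leq_add; [apply: leq_mul => //; apply: leq_mul => //; apply: ltnW | apply: leq_mul].
Qed.

Lemma Rrefl m : Rel m m.
Proof. by rewrite /Rel subrr; apply: ig0. Qed.
Lemma Rtrans m1 m2 m3 : Rel m1 m2 -> Rel m2 m3 -> Rel m1 m3.
Proof.
rewrite /Rel => h1 h2.
have -> : ('X_[m1] - 'X_[m3] : X) = ('X_[m1] - 'X_[m2]) + ('X_[m2] - 'X_[m3]).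
  by rewrite addrA subrK.
exact: igD.
Qed.

Lemma step m : ~ good m ->
  exists m', [/\ Rel m m', Dmn m' = Dmn m, mdeg m' = mdeg m & (P m < P m')%N].
Proof.
move=> ng.
have [a [b [ha [hb hv]]]] : exists a b, (0 < m a)%N /\ (0 < m b)%N /\ viol (var a) (var b).
  apply: NNPP => hn; apply: ng => a b ha hb hv; apply: hn; by exists a, b.
case: hv => c [h1 h2 h3 h4 h5].
have hab : a != b by apply/eqP => eab; subst b; rewrite h3 in h4.
have [u' [w' [hJ hf hD]]] := move h1 h2 h3 h4 h5.
set r := (m - (U_(a) + U_(b)))%MM.
have hm : m = (r + (U_(a) + U_(b)))%MM.
  rewrite submK //; apply/mnm_lepP => k; rewrite mnmDE !mnm1E.
  have [eak|nak] := eqVneq a k; have [ebk|nbk] := eqVneq b k.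
  - by move: hab; rewrite eak ebk eqxx.
  - by rewrite /= -eak.
  - by rewrite /= -ebk.
  - by [].
exists (r + (U_(rk u') + U_(rk w')))%MM; split.
- rewrite /Rel {1}hm !mpolyXD -mulrBr; apply: igM.
  by rewrite !rkK in hJ.
- by rewrite hm !Dmn_add !Dmn_U !varK hD.
- by rewrite hm !mdegD !mdeg1.
- by rewrite /P hm !LD !LU !varK ltn_add2l.
Qed.

Lemma norm_ex m : exists m', [/\ good m', Rel m m' & Dmn m' = Dmn m].
Proof.
suff H : forall N m, (mdeg m * C - P m < N)%N ->
    exists m', [/\ good m', Rel m m' & Dmn m' = Dmn m].
  exact: (H (mdeg m * C - P m).+1).
elim=> [//|N IH] m0 hN.
case: (classic (good m0)) => hg.
  by exists m0; split => //; apply: Rrefl.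
have [m1 [hR hD hd hP]] := step hg.
have hPb : (P m1 <= mdeg m1 * C)%N by apply: Lle => k; apply: f_le.
rewrite hd in hPb.
have [|m2 [g2 R2 D2]] := IH m1; first by rewrite hd; lia.
by exists m2; split => //; [apply: Rtrans hR R2 | rewrite D2 hD].
Qed.

Lemma Dmn0 x : Dmn 0%MM x = 0%N.
Proof. by rewrite DmnE /L big1 // => k _; rewrite mnm0E. Qed.

Lemma yd_pres m k : (0 < m k)%N -> (0 < Dmn m (lshift n (lab (var k))))%N.
Proof.
move=> h; rewrite DmnE /L (bigD1 k) //= Dv_l eqxx muln1.
exact: (leq_trans h (leq_addr _ _)).
Qed.

Lemma bd_pres m k c : (0 < m k)%N -> c \in st (var k) -> (0 < Dmn m (rshift n c))%N.
Proof.
move=> h hc; rewrite DmnE /L (bigD1 k) //= Dv_r hc muln1.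
exact: (leq_trans h (leq_addr _ _)).
Qed.

Lemma yd_ex m i : (0 < Dmn m (lshift n i))%N -> exists k, (0 < m k)%N /\ lab (var k) = i.
Proof.
rewrite DmnE /L => h; apply: NNPP => hn; move: h; rewrite big1 // => k _.
rewrite Dv_l; case: eqP => [e|_]; last by rewrite muln0.
case: (posnP (m k)) => [->//|hk]; exfalso; apply: hn; by exists k.
Qed.

Lemma bd_ex m c : (0 < Dmn m (rshift n c))%N -> exists k, (0 < m k)%N /\ c \in st (var k).
Proof.
rewrite DmnE /L => h; apply: NNPP => hn; move: h; rewrite big1 // => k _.
rewrite Dv_r; case: (boolP (c \in st (var k))) => [e|_]; last by rewrite muln0.
case: (posnP (m k)) => [->//|hk]; exfalso; apply: hn; by exists k.
Qed.

Definition istop m a := (0 < m a)%N /\ forall b, (0 < m b)%N ->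
  (lab (var b) <= lab (var a))%N /\
  (lab (var b) = lab (var a) :> nat -> #|st (var b)| <= #|st (var a)|)%N.

Lemma top_ex m (a0 : 'I_NVn) : (0 < m a0)%N -> exists a, istop m a.
Proof.
move=> h0.
case: (@arg_maxnP _ a0 (fun k => 0 < m k)%N (fun k => lab (var k) * n.+1 + #|st (var k)|)%N h0)
  => a ha hmax.
exists a; split => // b hb; have := hmax b hb.
have hsa : (#|st (var a)| <= n)%N by have := max_card (mem (st (var a))); rewrite card_ord.
have hsb : (#|st (var b)| <= n)%N by have := max_card (mem (st (var b))); rewrite card_ord.
move=> hk; split.
  rewrite leqNgt; apply/negP => hlt.
  have : ((lab (var a)).+1 * n.+1 <= lab (var b) * n.+1)%N by rewrite leq_mul2r hlt orbT.
  rewrite mulSn; lia.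
move=> e; rewrite e in hk; lia.
Qed.

Lemma top_set m a : good m -> istop m a ->
  st (var a) = [set c | (c != lab (var a)) && (0 < Dmn m (rshift n c))%N].
Proof.
move=> hg [ha htop]; apply/setP => c; rewrite inE; apply/idP/idP.
  move=> hc; rewrite (bd_pres ha hc) andbT.
  by apply/eqP => e; have := lab_st (var a); rewrite -e hc.
case/andP => hne /bd_ex [b [hb hcb]].
apply/negPn/negP => hn.
have [h1 h2] := htop b hb.
apply: (hg b a hb ha); exists c; split => //.
by move=> e; apply: h2; rewrite e.
Qed.

Lemma ex_pres m : (0 < mdeg m)%N -> exists k, (0 < m k)%N.
Proof.
rewrite mdegE => h; apply: NNPP => hn; move: h; rewrite big1 // => k _.
by case: (posnP (m k)) => // hk; exfalso; apply: hn; exists k.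
Qed.

Lemma uniq_good d : forall m1 m2, mdeg m1 = d -> good m1 -> good m2 ->
  Dmn m1 = Dmn m2 -> m1 = m2.
Proof.
elim: d => [|d IH] m1 m2 hd g1 g2 hD.
  move/eqP: hd; rewrite mdeg_eq0 => /eqP e1; subst m1.
  apply/mnmP => k; rewrite mnm0E; apply/eqP; rewrite eq_sym -leqn0 leqNgt.
  apply/negP => hk; have := yd_pres hk; by rewrite -hD Dmn0.
have [k1 hk1] : exists k, (0 < m1 k)%N by apply: ex_pres; rewrite hd.
have [a1 t1] := top_ex hk1.
have hy1 := yd_pres t1.1; rewrite hD in hy1; have [k2 [hk2 ek2]] := yd_ex hy1.
have [a2 t2] := top_ex hk2.
have hy2 := yd_pres t2.1; rewrite -hD in hy2; have [k3 [hk3 ek3]] := yd_ex hy2.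
have el : lab (var a1) = lab (var a2).
  apply: val_inj; apply/eqP; rewrite eqn_leq.
  have := (t2.2 k2 hk2).1; rewrite ek2 => ->.
  by have := (t1.2 k3 hk3).1; rewrite ek3 => ->.
have es : st (var a1) = st (var a2) by rewrite (top_set g1 t1) (top_set g2 t2) hD el.
have ea : a1 = a2 by rewrite -(rkK a1) -(rkK a2) (V_eq el es).
subst a2.
have hm1 : m1 = (m1 - U_(a1) + U_(a1))%MM by rewrite submK // lep1mP -lt0n t1.1.
have hm2 : m2 = (m2 - U_(a1) + U_(a1))%MM by rewrite submK // lep1mP -lt0n t2.1.
rewrite hm1 hm2; congr (_ + _)%MM; apply: IH.
  by move: hd; rewrite {1}hm1 mdegD mdeg1 addn1 => -[].
- move=> a b ha hb; apply: g1; [move: ha | move: hb]; rewrite mnmBE; 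
    move=> h; apply: (leq_trans h); exact: leq_subr.
- move=> a b ha hb; apply: g2; [move: ha | move: hb]; rewrite mnmBE;
    move=> h; apply: (leq_trans h); exact: leq_subr.
- apply: (@addIm _ (Dv (var a1))); by rewrite -Dmn_U -!Dmn_add -hm1 -hm2.
Qed.


Definition nf m : 'X_{1..NVn} := proj1_sig (constructive_indefinite_description _ (norm_ex m)).
Lemma nf_spec m : [/\ good (nf m), Rel m (nf m) & Dmn (nf m) = Dmn m].
Proof. exact: (proj2_sig (constructive_indefinite_description _ (norm_ex m))). Qed.

Lemma ker_J p : phi p = 0 -> J p.
Proof.
move=> hp.
set Q := \sum_(m <- msupp p) p@_m *: ('X_[nf m] : X).
have hQ : Q = 0.
  apply/mpolyP => g; rewrite mcoeff0.
  have -> : Q@_g = \sum_(m <- msupp p) p@_m * (nf m == g)%:R.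
    by rewrite /Q raddf_sum; apply: eq_bigr => m _ /=; rewrite mcoeffZ mcoeffX.
  case: (classic (good g)) => hg.
    have h0 : (phi p)@_(Dmn g) = 0 by rewrite hp mcoeff0.
    rewrite phi_sum raddf_sum /= in h0; rewrite -[RHS]h0; apply: eq_bigr => m _ /=.
    rewrite mcoeffCM mcoeffX; congr (_ * _%:R).
    have [g1 _ d1] := nf_spec m.
    suff -> : (nf m == g) = (Dmn m == Dmn g) by [].
    apply/idP/idP => /eqP h; apply/eqP.
      by rewrite -h d1.
    by move: h => e; apply: (uniq_good (erefl _) g1 hg); rewrite d1.
  rewrite big1 // => m _.
  have [g1 _ _] := nf_spec m.
  have : nf m != g by apply/eqP => e; apply: hg; rewrite -e.
  by move/negbTE => ->; rewrite mulr0.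
have : J (p - Q).
  rewrite {1}(mpolyE p) /Q -sumrB; apply: igsum => m.
  rewrite -scalerBr -mul_mpolyC; apply: igM.
  by have [_ h _] := nf_spec m.
by rewrite hQ subr0.
Qed.

Lemma phi_bin (u w u' w' : V) :
  (forall x, (lab u == x) + (lab w == x) = (lab u' == x) + (lab w' == x))%N ->
  (forall c, (c \in st u) + (c \in st w) = (c \in st u') + (c \in st w'))%N ->
  phi ('X_(rk u) * 'X_(rk w) - 'X_(rk u') * 'X_(rk w')) = 0.
Proof.
move=> hl hs.
by rewrite phiB !phiM !phiX !Dmn_U !varK -!mpolyXD (Dv_sum_eq hl hs) subrr.
Qed.

Lemma phi_gen g : g \in Tgens K n -> phi g = 0.
Proof.
rewrite mem_cat => /orP [] /mapP [[[[i A] j] B]]; rewrite mem_enum /= => hpred ->.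
  case/and5P: hpred => _ hu hw hm hM.
  rewrite /T1_bin; case: (leqP i j) => hij.
    rewrite hij in hm hM.
    rewrite (xvarE hu) (xvarE hw) (xvarE hm) (xvarE hM).
    apply: phi_bin => x //=.
    by rewrite /st /= !inE; case: (x \in A); case: (x \in B).
  rewrite leqNgt hij /= in hm hM.
  rewrite (xvarE hu) (xvarE hw) (xvarE hm) (xvarE hM).
  apply: phi_bin => x /=; first by rewrite /lab /= addnC.
  by rewrite /st /= !inE; case: (x \in A); case: (x \in B).
case/and5P: hpred => lij hu hw hjA _.
have hu' : i \notin (A :&: B) :|: [set j].
  by rewrite !inE (negbTE hu) /= neq_ltn lij.
have hw' : j \notin (A :\ j) :|: B by rewrite !inE eqxx /= (negbTE hw).
rewrite /T2_bin (xvarE hu) (xvarE hw) (xvarE hu') (xvarE hw').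
apply: phi_bin => x //=.
rewrite /st /= !inE; case: eqP => [->|_] /=.
  by rewrite hjA (negbTE hw).
by case: (x \in A); case: (x \in B).
Qed.

Lemma main p : phi p = 0 <-> J p.
Proof.
split; first exact: ker_J.
move=> [c ->].
rewrite (big_morph phi phiD (mmap0 _ _)).
rewrite big1 // => k _; by rewrite phiM (phi_gen (mem_nth 0 (ltn_ord k))) mulr0.
Qed.



End Main.

Theorem theorem3p5 (K : fieldType) (n : nat) (p : Xring K n) :
  phi p = 0 <-> in_ideal_gen (Tgens K n) p.
Proof. exact: main. Qed.
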